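(* For the hypercube $Q_n$: (1) $str(Q_2)\ge6$, $str(Q_3)\ge11$, $str(Q_4)\ge21$; (2) $str(Q_n)\ge 2^n+4n-12$ for $5\le n\le 9$; (3) $str(Q_{2m})\ge 2^{2m}+m^2+4$ for all $m\ge5$; (4) $str(Q_{2m-1})\ge 2^{2m-1}+m^2-m+4$ for all $m\ge6$.
   Context: $Q_n$ is the $n$-dimensional hypercube (vertex set $\mathbb Z_2^n$, adjacency iff differing in exactly one coordinate), of order $2^n$. For a graph $G$ of order $p$, a numbering is a bijection $f:V(G)\to[1,p]$; $str_f(G)=\max\{f(u)+f(v): uv\in E(G)\}$ and $str(G)=\min_f str_f(G)$. *)

(* Defs.v *)
From mathcomp Require Import all_boot.
Set Implicit Arguments. Unset Strict Implicit. Unset Printing Implicit Defensive.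

(* str_f(G) = max { f u + f v : uv edge } (ordered pairs; symmetric e gives same max). *)
Definition strf (T : finType) (e : rel T) (f : T -> nat) : nat :=
  \max_(p : T * T | e p.1 p.2) (f p.1 + f p.2).

(* A numbering is a bijection V -> [1, p], represented as a bijection
   g : V -> 'I_p (injective with #|V| = p), with f v = (g v).+1.
   str(G) = min over numberings of str_f(G).  The default 2*#|T| of the
   min is never attained since every str_f <= 2p - 1 and numberings exist. *)
Definition str (T : finType) (e : rel T) : nat :=
  \big[minn/(2 * #|T|)]_(g : {ffun T -> 'I_#|T|} | injectiveb g)
     strf e (fun v => (g v).+1).

Definition cube (n : nat) := {ffun 'I_n -> bool}.
Definition qadj (n : nat) : rel {ffun 'I_n -> bool} :=
  fun u v => #|[set i | u i != v i]| == 1.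

(* Main.v *)
Require Import Defs.
From mathcomp Require Import all_boot zify.
Set Implicit Arguments. Unset Strict Implicit. Unset Printing Implicit Defensive.

Section Geo.
Variable n : nat.
Local Notation V := {ffun 'I_n -> bool}.
Local Notation adj := (@qadj n).

Definition flip (x : V) (i : 'I_n) : V := [ffun j => if j == i then ~~ x j else x j].
Definition Dif (x y : V) : {set 'I_n} := [set i | x i != y i].

Lemma adjE u v : adj u v = (#|Dif u v| == 1). Proof. by []. Qed.

Lemma DifC x y : Dif x y = Dif y x.
Proof. by apply/setP=> i; rewrite !inE eq_sym. Qed.

Lemma adjC u v : adj u v = adj v u.
Proof. by rewrite !adjE DifC. Qed.

Lemma Dif0 x y : Dif x y = set0 -> x = y.
Proof.
move=> h; apply/ffunP=> i; have : i \in Dif x y = (i \in set0) by rewrite h.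
by rewrite !inE => /negbFE/eqP.
Qed.

Lemma adj_flipE u v : adj u v -> exists i, u = flip v i.
Proof.
rewrite adjE => /cards1P[i hi]; exists i; apply/ffunP=> j; rewrite ffunE.
have : j \in Dif u v = (j \in [set i]) by rewrite hi.
rewrite !inE.
case: (j == i) => /=.
  by case: (u j); case: (v j).
by move/negbFE/eqP.
Qed.

Lemma Dif_flip x i y :
  Dif (flip x i) y = if i \in Dif x y then Dif x y :\ i else i |: Dif x y.
Proof.
apply/setP=> j; case: (boolP (i \in Dif x y)) => hi;
  rewrite !inE ffunE; case: (eqVneq j i) => [->|hji] //=;
  by move: hi; rewrite inE; case: (x i); case: (y i).
Qed.

Lemma card_Dif_flip x i y :
  #|Dif (flip x i) y| = if i \in Dif x y then #|Dif x y|.-1 else #|Dif x y|.+1.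
Proof.
rewrite Dif_flip; case: ifP => h.
  by rewrite (cardsD1 i (Dif x y)) h.
by rewrite cardsU1 h.
Qed.

Lemma flip_adj v i : adj (flip v i) v.
Proof.
rewrite adjE card_Dif_flip.
have -> : Dif v v = set0 by apply/setP=> j; rewrite !inE eqxx.
by rewrite inE cards0.
Qed.

Lemma flip_inj v : injective (flip v).
Proof.
move=> i j /ffunP /(_ i); rewrite !ffunE eqxx.
case: (eqVneq i j) => // _; by case: (v i).
Qed.

Lemma deg v : #|[set u | adj u v]| = n.
Proof.
have -> : [set u | adj u v] = flip v @: setT.
  apply/setP=> u; rewrite inE; apply/idP/imsetP.
    by move/adj_flipE=> [i ->]; exists i.
  by move=> [i _ ->]; apply: flip_adj.
by rewrite card_imset ?cardsT ?card_ord //; apply: flip_inj.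
Qed.

Lemma common u x y : adj u x -> adj u y -> x != y ->
  exists2 i, i \in Dif x y & u = flip x i /\ #|Dif x y| = 2.
Proof.
move=> ux uy hxy; case/adj_flipE: ux uy => i -> uy; move: uy; rewrite adjE card_Dif_flip.
case: ifP => hi.
  by move=> /eqP h; exists i => //; split => //; move: h (cardsD1 i (Dif x y)); rewrite hi; lia.
move=> /eqP [] /eqP; rewrite cards_eq0 => /eqP /Dif0 exy.
by rewrite exy eqxx in hxy.
Qed.

Definition cn (x y : V) := #|[set u | adj u x && adj u y]|.

Lemma cn_le2 x y : x != y -> cn x y <= 2.
Proof.
move=> hxy; rewrite /cn.
case: (eqVneq [set u | adj u x && adj u y] set0) => [->|/set0Pn [u]]; first by rewrite cards0.
rewrite inE => /andP[ux uy].
case: (common ux uy hxy) => i _ [_ h2].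
apply: leq_trans (_ : #|flip x @: Dif x y| <= 2).
  apply: subset_leq_card; apply/subsetP=> w; rewrite inE => /andP[wx wy].
  case: (common wx wy hxy) => j hj [-> _]; exact: imset_f.
by rewrite -h2 leq_imset_card.
Qed.

Lemma cn_pos x y : 0 < cn x y -> x != y -> #|Dif x y| = 2.
Proof.
rewrite /cn card_gt0 => /set0Pn[u]; rewrite inE => /andP[ux uy] hxy.
by case: (common ux uy hxy) => i _ [].
Qed.

Lemma triple x y w : x != y -> x != w -> y != w ->
  0 < cn x y -> 0 < cn x w -> 0 < cn y w ->
  exists u, [&& adj u x, adj u y & adj u w].
Proof.
move=> hxy hxw hyw /cn_pos /(_ hxy) h1 /cn_pos /(_ hxw) h2 /cn_pos /(_ hyw) h3.
case: (eqVneq (Dif x y :&: Dif x w) set0) => [h0|/set0Pn [i]].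
  have e : Dif y w = Dif x y :|: Dif x w.
    apply/setP=> j; have : j \in Dif x y :&: Dif x w = (j \in set0) by rewrite h0.
    rewrite !inE; by case: (x j); case: (y j); case: (w j).
  by move: h3; rewrite e cardsU h0 cards0 h1 h2.
rewrite inE => /andP[iy iw]; exists (flip x i).
by rewrite flip_adj /= !adjE !card_Dif_flip iy iw h1 h2.
Qed.

Lemma cnC x y : cn x y = cn y x.
Proof. by rewrite /cn; apply: eq_card => u; rewrite !inE andbC. Qed.

End Geo.

Lemma card_sumb (T : finType) (P : pred T) : #|[set u | P u]| = \sum_u P u.
Proof.
by rewrite -sum1_card big_mkcond /=; apply: eq_bigr => u _; rewrite inE; case: (P u).
Qed.

Lemma sum_pos (T : finType) (P : pred T) u : P u -> 0 < \sum_v P v.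
Proof. by move=> h; rewrite (bigD1 u) //= h. Qed.

Lemma sub_seq_le (T : finType) (s : seq T) (S : {set T}) (F : T -> nat) :
  uniq s -> {subset s <= S} -> \sum_(x <- s) F x <= \sum_(x in S) F x.
Proof.
move=> us sS; rewrite big_uniq // [X in _ <= X](bigID (fun x => x \in s)) /=.
have -> : \sum_(i in S | i \in s) F i = \sum_(i in s) F i.
  by apply: eq_bigl => x; case: (boolP (x \in s)) => h; rewrite ?andbT ?andbF // (sS _ h).
exact: leq_addr.
Qed.

Lemma pt1 d : 2 * (0 < d) + d * (d - 1) = 2 * d + (d - 1) * (d - 2).
Proof. case: d => [|[|d]] //=; nia. Qed.

Lemma pt3 (p q r t : bool) :
  3 * ([&& p, q & r] + [&& p, q & t] + [&& p, r & t] + [&& q, r & t])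
  <= 2 * ((p + (q + (r + (t + 0)))) - 1) * ((p + (q + (r + (t + 0)))) - 2).
Proof. by case: p; case: q; case: r; case: t. Qed.

Lemma arith (cab cac cad cbc cbd ccd tabc tabd tacd tbcd G : nat) :
  ((0 < cab) && (0 < cac) && (0 < cbc) : nat) <= tabc ->
  ((0 < cab) && (0 < cad) && (0 < cbd) : nat) <= tabd ->
  ((0 < cac) && (0 < cad) && (0 < ccd) : nat) <= tacd ->
  ((0 < cbc) && (0 < cbd) && (0 < ccd) : nat) <= tbcd ->
  3 * (tabc + tabd + tacd + tbcd) <= 2 * G ->
  6 <= G + 2 * ((2 - cab) + (2 - cac) + (2 - cad) + (2 - cbc) + (2 - cbd) + (2 - ccd)).
Proof.
case: (posnP cab) => [->|?]; case: (posnP cac) => [->|?]; case: (posnP cad) => [->|?];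
case: (posnP cbc) => [->|?]; case: (posnP cbd) => [->|?]; case: (posnP ccd) => [->|?];
move=> /= *; lia.
Qed.


Section Count.
Variable n : nat.
Local Notation V := {ffun 'I_n -> bool}.
Local Notation adj := (@qadj n).
Variable S : {set V}.

Definition dS u := \sum_(v in S) adj u v.
Definition NS := [set u | [exists v in S, adj u v]].

Lemma cardNS : #|NS| = \sum_u (0 < dS u).
Proof.
rewrite /NS card_sumb; apply: eq_bigr => u _; congr (nat_of_bool _).
apply/existsP/idP => [[v /andP[vS uv]]|].
  by rewrite /dS (bigD1 v) //= uv.
rewrite lt0n /dS sum_nat_eq0 => /forallPn [v]; rewrite negb_imply => /andP[vS].
move=> h; exists v; rewrite vS /=; move: h; by case: (adj u v).
Qed.

Lemma sum_dS : \sum_u dS u = #|S| * n.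
Proof.
rewrite /dS exchange_big /= -sum_nat_const; apply: eq_bigr => v _.
by rewrite -card_sumb deg.
Qed.

Lemma dd1 u : dS u * (dS u - 1) =
  \sum_(x in S) \sum_(y in S) (x != y) * (adj u x && adj u y).
Proof.
have h x : x \in S -> \sum_(y in S) (x != y) * (adj u x && adj u y) = adj u x * (dS u - 1).
  move=> xS; rewrite /dS (bigD1 x xS) /= eqxx mul0n add0n.
  rewrite (eq_bigr (fun y => adj u x * adj u y)); last first.
    by move=> y /andP[_ yx]; rewrite eq_sym yx mul1n mulnb.
  rewrite -big_distrr /= [X in _ = _ * (X - 1)](bigD1 x xS) /=.
  by case: (adj u x) => //=; rewrite !mul1n add1n subn1.
rewrite (eq_bigr _ h) -big_distrl /=; done.
Qed.

Lemma sumP : \sum_u dS u * (dS u - 1) = \sum_(x in S) \sum_(y in S) (x != y) * cn x y.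
Proof.
rewrite (eq_bigr _ (fun u _ => dd1 u)) exchange_big; apply: eq_bigr => x _.
rewrite exchange_big; apply: eq_bigr => y _; rewrite /cn card_sumb big_distrr.
by [].
Qed.

Lemma ident : 2 * #|NS| + \sum_(x in S) \sum_(y in S) (x != y) * cn x y
  = 2 * (#|S| * n) + \sum_u (dS u - 1) * (dS u - 2).
Proof.
rewrite cardNS -sumP -sum_dS !big_distrr -!big_split /=; apply: eq_bigr => u _.
exact: pt1.
Qed.

Lemma pairs : \sum_(x in S) \sum_(y in S) (x != y) * cn x y
  + \sum_(x in S) \sum_(y in S) (x != y) * (2 - cn x y) = #|S| * (2 * #|S| - 2).
Proof.
rewrite -big_split -sum_nat_const; apply: eq_bigr => x xS; rewrite -big_split /=.
rewrite (eq_bigr (fun y => (x != y) * 2)); last first.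
  move=> y _; case: (eqVneq x y) => //= hxy; rewrite !mul1n.
  by have := cn_le2 hxy; lia.
have h : \sum_(y in S) 2 = #|S| * 2 := sum_nat_const _ _.
rewrite (bigD1 x xS) /= in h.
rewrite (bigD1 x xS) /= eqxx mul0n add0n.
rewrite (eq_bigr (fun y => 2)); last by move=> y /andP[_ yx]; rewrite eq_sym yx.
rewrite mulnC; lia.
Qed.

Lemma nbr_bound : #|S| * n <= #|NS| + #|S| * (#|S| - 1).
Proof.
have := ident; have := pairs.
set P := \sum_(x in S) _; set E := \sum_(x in S) _; set G := \sum_u _.
have -> : #|S| * (2 * #|S| - 2) = 2 * (#|S| * (#|S| - 1)) by nia.
lia.
Qed.


Lemma gain (a b c d : V) : uniq [:: a; b; c; d] -> {subset [:: a; b; c; d] <= S} ->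
  6 <= \sum_u (dS u - 1) * (dS u - 2)
       + \sum_(x in S) \sum_(y in S) (x != y) * (2 - cn x y).
Proof.
set s := [:: a; b; c; d] => us sS.
have hE : \sum_(x <- s) \sum_(y <- s) (x != y) * (2 - cn x y)
    <= \sum_(x in S) \sum_(y in S) (x != y) * (2 - cn x y).
  apply: leq_trans (sub_seq_le _ us sS); apply: leq_sum => x _.
  exact: sub_seq_le.
have hG : \sum_u (\sum_(v <- s) adj u v - 1) * (\sum_(v <- s) adj u v - 2)
    <= \sum_u (dS u - 1) * (dS u - 2).
  apply: leq_sum => u _; have := sub_seq_le (fun v => (adj u v : nat)) us sS.
  rewrite -/(dS u) => h; apply: leq_mul; exact: leq_sub2r.
have tr (x y w : V) : x != y -> x != w -> y != w ->
   ((0 < cn x y) && (0 < cn x w) && (0 < cn y w) : nat)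
     <= \sum_u [&& adj u x, adj u y & adj u w].
  move=> h1 h2 h3; case: (boolP ((0 < cn x y) && (0 < cn x w) && (0 < cn y w))) => //.
  move=> /andP[/andP[p1 p2] p3]; case: (triple h1 h2 h3 p1 p2 p3) => u hu.
  by rewrite (bigD1 u) //= hu.
move: us; rewrite /s /= !inE !negb_or => /and4P[/and3P[hab hac had] /andP[hbc hbd] hcd _].
have hba := hab; rewrite eq_sym in hba. have hca := hac; rewrite eq_sym in hca.
have hda := had; rewrite eq_sym in hda. have hcb := hbc; rewrite eq_sym in hcb.
have hdb := hbd; rewrite eq_sym in hdb. have hdc := hcd; rewrite eq_sym in hdc.
have Hg : 3 * (\sum_u [&& adj u a, adj u b & adj u c] + \sum_u [&& adj u a, adj u b & adj u d]
   + \sum_u [&& adj u a, adj u c & adj u d] + \sum_u [&& adj u b, adj u c & adj u d])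
   <= 2 * \sum_u (\sum_(v <- s) adj u v - 1) * (\sum_(v <- s) adj u v - 2).
  rewrite -!big_split big_distrr /= big_distrr /=; apply: leq_sum => u _.
  rewrite /s !big_cons big_nil mulnA; exact: pt3.
move: hE; rewrite /s !big_cons !big_nil !eqxx hab hac had hbc hbd hcd hba hca hda hcb hdb hdc.
rewrite !mul0n !mul1n !addn0 !add0n (cnC b a) (cnC c a) (cnC d a) (cnC c b) (cnC d b) (cnC d c).
move=> hE.
have := arith (tr _ _ _ hab hac hbc) (tr _ _ _ hab had hbd) (tr _ _ _ hac had hcd)
  (tr _ _ _ hbc hbd hcd) Hg.
move=> h; apply: (leq_trans h); apply: leq_add; first exact: hG.
apply: leq_trans hE; lia.
Qed.

Lemma nbr_gain : 4 <= #|S| -> #|S| * n + 3 <= #|NS| + #|S| * (#|S| - 1).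
Proof.
move=> h4.
have us : uniq (take 4 (enum S)) by rewrite take_uniq // enum_uniq.
have sS : {subset take 4 (enum S) <= S} by move=> x /mem_take; rewrite mem_enum.
have sz : size (take 4 (enum S)) = 4 by rewrite size_take -cardE; case: ltnP => // ?; lia.
move: us sS sz; case: (take 4 (enum S)) => [|a [|b [|c [|d [|]]]]] //= us sS _.
have := gain us sS; have := ident; have := pairs.
set P := \sum_(x in S) _; set E := \sum_(x in S) _; set G := \sum_u _.
have -> : #|S| * (2 * #|S| - 2) = 2 * (#|S| * (#|S| - 1)) by nia.
move=> h1 h2 h3.
have hh : 2 * (#|S| * n) + 6 <= 2 * #|NS| + 2 * (#|S| * (#|S| - 1)) by lia.
move: hh; set X := #|S| * n; set Y := #|S| * (#|S| - 1); clear. set Z := #|NS|. clearbody X Y Z. lia.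
Qed.

End Count.

Section Str.
Variables (T : finType) (e : rel T).
Hypothesis esym : symmetric e.
Local Notation p := #|T|.

Lemma top_card (g : {ffun T -> 'I_p}) k : injective g -> k <= p ->
  #|[set v | p - k <= g v]| = k.
Proof.
move=> ginj hk; set S := [set v | p - k <= g v].
have vinj : injective (fun v => nat_of_ord (g v)) by move=> x y /ord_inj /ginj.
have h1 : #|S| <= k.
  have := @uniq_leq_size _ [seq nat_of_ord (g v) | v <- enum S] (iota (p - k) k).
  rewrite size_map -cardE size_iota; apply; first by rewrite (map_inj_uniq vinj) enum_uniq.
  move=> x /mapP[v]; rewrite mem_enum inE => hv ->; rewrite mem_iota hv /=.
  by rewrite subnK.
have h2 : #|~: S| <= p - k.
  have := @uniq_leq_size _ [seq nat_of_ord (g v) | v <- enum (~: S)] (iota 0 (p - k)).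
  rewrite size_map -cardE size_iota; apply; first by rewrite (map_inj_uniq vinj) enum_uniq.
  move=> x /mapP[v]; rewrite mem_enum !inE -ltnNge => hv ->; rewrite mem_iota add0n hv.
  done.
have := cardsC S; lia.
Qed.

Lemma maxlab (g : {ffun T -> 'I_p}) (A : {set T}) : injective g -> 0 < #|A| ->
  exists2 u, u \in A & #|A| <= (g u).+1.
Proof.
move=> ginj hA; case: (boolP [exists x in A, #|A| <= (g x).+1]) => [/exists_inP //|/exists_inPn h]; exfalso.
have vinj : injective (fun v => nat_of_ord (g v)) by move=> x y /ord_inj /ginj.
have hs : {subset [seq nat_of_ord (g v) | v <- enum A] <= iota 0 (#|A| - 1)}.
  move=> x /mapP[v]; rewrite mem_enum => hv ->; rewrite mem_iota add0n.
  have := h v hv; rewrite -ltnNge; lia.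
have hu : uniq [seq nat_of_ord (g v) | v <- enum A] by rewrite (map_inj_uniq vinj) enum_uniq.
have := uniq_leq_size hu hs; rewrite size_map -cardE size_iota; lia.
Qed.

Lemma strf_top (g : {ffun T -> 'I_p}) k (S : {set T}) : injective g ->
  S = [set v | p - k <= g v] ->
  0 < #|[set u | [exists v in S, e u v]]| ->
  p - k + 1 + #|[set u | [exists v in S, e u v]]| <= strf e (fun v => (g v).+1).
Proof.
move=> ginj -> hA; case: (maxlab ginj hA) => u; rewrite inE => /exists_inP[v].
rewrite inE => hv huv hu.
have : (g v).+1 + (g u).+1 <= strf e (fun v => (g v).+1).
  by apply: (@leq_bigmax_cond _ (fun q : T * T => e q.1 q.2) _ (v, u)) => /=; rewrite esym.
lia.
Qed.

Lemma str_ge B : B <= 2 * p ->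
  (forall g : {ffun T -> 'I_p}, injective g -> B <= strf e (fun v => (g v).+1)) ->
  B <= str e.
Proof.
move=> h2 H; rewrite /str; apply: (big_ind (fun x => B <= x)) => //.
  by move=> x y hx hy; rewrite leq_min hx hy.
by move=> g /injectiveP; apply: H.
Qed.
End Str.

Lemma card_cube n : #|{ffun 'I_n -> bool}| = 2 ^ n.
Proof. by rewrite card_ffun card_bool card_ord. Qed.

Lemma cube_lb n k B : 1 <= k <= 2 ^ n -> B <= 2 * 2 ^ n ->
  (forall S : {set {ffun 'I_n -> bool}}, #|S| = k ->
     B + k <= 2 ^ n + 1 + #|NS S| /\ 0 < #|NS S|) ->
  B <= str (@qadj n).
Proof.
move=> /andP[k1 kp] hB H; have hc := card_cube n.
apply: str_ge; first by rewrite hc.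
move=> g ginj.
have hk : k <= #|{ffun 'I_n -> bool}| by rewrite hc.
have [h1 h2] := H _ (top_card ginj hk).
have H3 := strf_top (@adjC n) ginj (erefl _) h2.
move: H3 h1 h2; set S := [set v | _ - k <= g v]; clearbody S; move: (strf _ _) => st.
rewrite card_cube => a b c; apply: leq_trans a.
have : #|NS S| = #|[set u | [exists v in S, qadj u v]]| by [].
lia.
Qed.

Lemma sq_le_pow n : 4 <= n -> n ^ 2 <= 2 ^ n.
Proof.
elim: n => // n IH h; case: (eqVneq n 3) => [->//|hn].
have h' : 4 <= n by lia.
have := IH h'; rewrite -!mulnn [2 ^ n.+1]expnS; move: (2 ^ n) => X; nia.
Qed.

Theorem mainTheorem18 :
  (6 <= str (@qadj 2) /\ 11 <= str (@qadj 3) /\ 21 <= str (@qadj 4)) /\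
  (forall n, 5 <= n <= 9 -> 2 ^ n + 4 * n - 12 <= str (@qadj n)) /\
  (forall m, 5 <= m -> 2 ^ (2 * m) + m ^ 2 + 4 <= str (@qadj (2 * m))) /\
  (forall m, 6 <= m ->
     2 ^ (2 * m - 1) + m ^ 2 - m + 4 <= str (@qadj (2 * m - 1))).
Proof.
split; [split; [|split]|split; [|split]].
- apply: (@cube_lb 2 1) => // S hS; have := nbr_bound S; rewrite hS /= => h; lia.
- apply: (@cube_lb 3 1) => // S hS; have := nbr_bound S; rewrite hS /= => h; lia.
- apply: (@cube_lb 4 2) => // S hS; have := nbr_bound S; rewrite hS /= => h; lia.
- move=> n /andP[h5 h9]; have hp := @sq_le_pow n ltac:(lia).
  apply: (@cube_lb n 4).
  + rewrite /=; move: hp; rewrite -mulnn; move: (2 ^ n) => X; nia.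
  + move: hp; rewrite -mulnn; move: (2 ^ n) => X; nia.
  move=> S hS; have := nbr_gain (S := S); rewrite hS => /(_ isT) h.
  move: (2 ^ n) => X; lia.
- move=> m h5; have hp := @sq_le_pow (2 * m) ltac:(lia).
  apply: (@cube_lb (2 * m) m).
  + move: hp; rewrite -mulnn; move: (2 ^ (2 * m)) => X H; apply/andP; split; nia.
  + move: hp; rewrite -!mulnn; move: (2 ^ (2 * m)) => X; nia.
  move=> S hS; have := nbr_gain (S := S); rewrite hS => /(_ ltac:(lia)) h.
  move: h; rewrite -mulnn; move: (2 ^ (2 * m)) (#|NS S|) => X N; nia.
- move=> m h6; have hp := @sq_le_pow (2 * m - 1) ltac:(lia).
  apply: (@cube_lb (2 * m - 1) m).
  + move: hp; rewrite -mulnn; move: (2 ^ (2 * m - 1)) => X H; apply/andP; split; nia.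
  + move: hp; rewrite -!mulnn; move: (2 ^ (2 * m - 1)) => X; nia.
  move=> S hS; have := nbr_gain (S := S); rewrite hS => /(_ ltac:(lia)) h.
  move: h; rewrite -mulnn; move: (2 ^ (2 * m - 1)) (#|NS S|) => X N; nia.
Qed.
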